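(* Let $(X,\tau)$ be a $T_0$ space and $\mathcal{F}$ a directed family of nonempty finite subsets of $X$. If $x\in U\in\tau_{SI_2}(X)$ and $\bigcap_{F\in\mathcal{F}}\uparrow F\subseteq\uparrow x$, then $F\subseteq U$ for some $F\in\mathcal{F}$.
   Context: For a $T_0$ space $(X,\tau)$, the specialization order is $y\le x$ iff $y\in\operatorname{cl}(\{x\})$; all order notions refer to it. For $A\subseteq X$: $\uparrow A=\{x: a\le x \text{ for some } a\in A\}$, $A^{\uparrow}$ is the set of upper bounds of $A$, $A^{\downarrow}$ the set of lower bounds, and $A^{\delta}=(A^{\uparrow})^{\downarrow}$. A nonempty $E\subseteq X$ is irreducible if whenever $E\subseteq B\cup C$ with $B,C$ closed, then $E\subseteq B$ or $E\subseteq C$. A nonempty family $\mathcal{G}$ of subsets of $X$ is directed if for $G_1,G_2\in\mathcal{G}$ there is $G\in\mathcal{G}$ with $G\subseteq\uparrow G_1\cap\uparrow G_2$. A set $U\subseteq X$ is weakly irreducibly open if $U\in\tau$ and for every irreducible $E\subseteq X$, $E^{\delta}\cap U\neq\emptyset$ implies $E\cap U\neq\emptyset$; these form the topology $\tau_{SI_2}(X)$. *)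

(* Defs.v *)
From HB Require Import structures.
From mathcomp Require Import all_boot all_order.
From mathcomp Require Import all_classical all_reals all_analysis.
Set Implicit Arguments. Unset Strict Implicit. Unset Printing Implicit Defensive.
Local Open Scope classical_set_scope.

Section SpecOrder.
Variable T : topologicalType.

(* specialization order: spec_le y x  <->  y <= x  <->  y \in cl {x} *)
Definition spec_le (y x : T) : Prop := closure [set x] y.

Definition upset (A : set T) : set T := [set x | exists2 a, A a & spec_le a x].
Definition ubounds (A : set T) : set T := [set x | forall a, A a -> spec_le a x].
Definition lbounds (A : set T) : set T := [set x | forall a, A a -> spec_le x a].
Definition delta (A : set T) : set T := lbounds (ubounds A).

Definition irreducible (E : set T) : Prop :=
  E !=set0 /\
  forall B C : set T, closed B -> closed C -> E `<=` B `|` C -> E `<=` B \/ E `<=` C.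

Definition directed_family (G : set (set T)) : Prop :=
  G !=set0 /\
  forall G1 G2, G G1 -> G G2 -> exists2 G3, G G3 & G3 `<=` upset G1 `&` upset G2.

(* members of tau_{SI_2}(X) *)
Definition weakly_irreducibly_open (U : set T) : Prop :=
  open U /\
  forall E : set T, irreducible E -> delta E `&` U !=set0 -> E `&` U !=set0.

End SpecOrder.

(* Main.v *)
Require Import Defs.
From HB Require Import structures.
From mathcomp Require Import all_boot all_order.
From mathcomp Require Import all_classical all_reals all_analysis.
Local Open Scope classical_set_scope.

Lemma closed_down {T : topologicalType} (D : set T) (a b : T) :
  closed D -> D a -> spec_le b a -> D b.
Proof.
move=> cD Da ba; rewrite (closure_id D).1 //.
by apply: (closureS _ ba) => y ->.
Qed.

Lemma chain_seq (T : choiceType) (U : set T) (F' : set (set T)) (V0 : set T) :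
  F' V0 -> total_on F' subset -> forall s : seq T,
  (forall y, y \in s -> U y \/ exists2 V, F' V & V y) ->
  exists2 V, F' V & forall y, y \in s -> U y \/ V y.
Proof.
move=> FV0 tot; elim=> [|a s IH] H.
  by exists V0 => // y; rewrite in_nil.
have [V1 FV1 HV1] : exists2 V, F' V & forall y, y \in s -> U y \/ V y.
  by apply: IH => y ys; apply: H; rewrite in_cons ys orbT.
have := H a; rewrite in_cons eqxx => /(_ isT) [Ua|[V2 FV2 V2a]].
  exists V1 => // y; rewrite in_cons => /orP[/eqP->|ys]; first by left.
  exact: HV1.
have [V12|V21] := tot _ _ FV1 FV2.
  exists V2 => // y; rewrite in_cons => /orP[/eqP->|ys]; first by right.
  by case: (HV1 y ys) => [|/V12]; [left|right].
exists V1 => // y; rewrite in_cons => /orP[/eqP->|ys]; first by right; apply: V21.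
exact: HV1.
Qed.

Theorem proposition4p1 (T : topologicalType) (hT0 : kolmogorov_space T)
    (F : set (set T)) (x : T) (U : set T) :
  directed_family F ->
  (forall G, F G -> G !=set0 /\ finite_set G) ->
  U x -> weakly_irreducibly_open U ->
  \bigcap_(G in F) upset G `<=` upset [set x] ->
  exists2 G, F G & G `<=` U.
Proof.
move=> [[G0 FG0] dir] hfin Ux [oU wU] hcap.
apply: contrapT => hneg.
have hmeet : forall G, F G -> exists2 g, G g & ~ U g.
  move=> G FG; apply: contrapT => hn; apply: hneg; exists G => // g Gg.
  by apply: contrapT => nU; apply: hn; exists g.
pose P (V : set T) := open (U `|` V) /\
  forall G, F G -> exists2 g, G g & ~ (U `|` V) g.
have [V [[oV mV] Vmax]] : exists A, P A /\ forall B, A `<` B -> ~ P B.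
  apply: Zorn_bigcup => F' F'P tot; split.
    have -> : U `|` \bigcup_(X in F') X = U `|` \bigcup_(X in F') (U `|` X).
      apply/seteqP; split=> y /=.
        by case=> [Uy|[X FX Xy]]; [left|right; exists X => //; right].
      by case=> [Uy|[X FX [Uy|Xy]]]; [left|left|right; exists X].
    apply: openU => //; apply: bigcup_open => X FX; exact: (F'P X FX).1.
  move=> G FG; apply: contrapT => hn.
  have allin : forall g, G g -> U g \/ exists2 X, F' X & X g.
    move=> g Gg; apply: contrapT => h; apply: hn; exists g => // hh; case: hh => [Ug|[X FX Xg]].
  have [[V0 FV0]|F'0] := pselect (F' !=set0); last first.
    have [g Gg nUg] := hmeet G FG.
    by case: (allin g Gg) => // -[X FX _]; apply: F'0; exists X.
  have [s Gs] := (finite_seqP G).1 (hfin G FG).2.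
  have [V FV HV] := @chain_seq _ U F' V0 FV0 tot s (fun y ys => allin y ltac:(by rewrite Gs)).
  have [g Gg ng] := (F'P V FV).2 G FG.
  by apply: ng; apply: HV; move: Gg; rewrite Gs.
pose A := ~` (U `|` V).
have cA : closed A by exact: open_closedC.
have AnU : forall y, A y -> ~ U y by move=> y Ay Uy; apply: Ay; left.
have minA : forall B, closed B ->
    (forall G, F G -> exists2 g, G g & (A `&` B) g) -> A `<=` B.
  move=> B cB hB; pose V' := V `|` ~` B.
  have PV' : P V'.
    split.
      have -> : U `|` V' = (U `|` V) `|` ~` B by rewrite /V' setUA.
      by apply: openU => //; exact: closed_openC.
    move=> G FG; have [g Gg [Ag Bg]] := hB G FG; exists g => //.
    by case=> [Ug|[Vg|nBg]]; [apply: Ag; left|apply: Ag; right|].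
  have VV' : V = V'.
    apply: contrapT => ne; apply: (Vmax V') => //.
    split; first by move=> y Vy; left.
    by move=> V'V; apply: ne; apply/seteqP; split => // y Vy; left.
  move=> y Ay; apply: contrapT => nBy; apply: Ay; right.
  by rewrite VV'; right.
have irrA : irreducible A.
  split.
    by have [g _ Ag] := mV G0 FG0; exists g.
  move=> B C cB cC ABC; apply: contrapT => /not_orP[nB nC].
  have notall : forall D, closed D -> ~ A `<=` D ->
      exists2 G, F G & forall g, G g -> ~ (A `&` D) g.
    move=> D cD nD; apply: contrapT => h; apply: nD; apply: minA => // G FG.
    apply: contrapT => h2; apply: h; exists G => // g Gg ADg; apply: h2.
    by exists g.
  have [G1 FG1 h1] := notall B cB nB.
  have [G2 FG2 h2] := notall C cC nC.
  have [G3 FG3 G3sub] := dir G1 G2 FG1 FG2.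
  have [a G3a Aa] := mV G3 FG3.
  have [u1 G1u1 le1] := (G3sub a G3a).1.
  have [u2 G2u2 le2] := (G3sub a G3a).2.
  case: (ABC a Aa) => [Ba|Ca].
    have cAB : closed (A `&` B) by apply: closedI.
    have H := closed_down _ _ _ cAB (conj Aa Ba) le1; exact: (h1 u1 G1u1 H).
  have cAC : closed (A `&` C) by apply: closedI.
  have H := closed_down _ _ _ cAC (conj Aa Ca) le2; exact: (h2 u2 G2u2 H).
have xdelta : delta A x.
  move=> u ubu.
  have : upset [set x] u.
    apply: hcap => G FG; have [g Gg Ag] := mV G FG.
    by exists g => //; apply: ubu.
  by case=> a -> .
have hx : (delta A `&` U) x by split.
have [y [Ay Uy]] := wU A irrA (ex_intro _ x hx).
exact: (AnU y Ay Uy).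
Qed.
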